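(* Let $X$ and $Y$ be Banach spaces such that $X$ coarsely Lipschitz embeds into $Y$. Then $\mathcal F(X)$ is crudely finitely representable in $\mathcal F(Y)$.
   Context: $X$ coarsely Lipschitz embeds into $Y$ if there are a map $f\colon X\to Y$ and constants $A,B>0$, $C\geq 0$ such that $A\|x-y\|-C\leq\|f(x)-f(y)\|\leq B\|x-y\|+C$ for all $x,y\in X$. A Banach space $E_0$ is crudely finitely representable in a Banach space $W$ if there is $\lambda\geq1$ such that for every finite-dimensional subspace $E$ of $E_0$ and every $\varepsilon>0$ there is a finite-dimensional subspace $F$ of $W$ with Banach–Mazur distance $d(E,F)\leq\lambda+\varepsilon$. For a Banach space $Z$ (pointed at $0$), $\mathrm{Lip}_0(Z)$ is the Banach space of real Lipschitz functions vanishing at $0$ normed by the Lipschitz constant, and $\mathcal F(Z)=\overline{\mathrm{span}}\{\delta(x):x\in Z\}\subset\mathrm{Lip}_0(Z)^*$, $\delta(x)$ being evaluation at $x$. *)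

(* Defs.v *)
From HB Require Import structures.
From mathcomp Require Import all_boot all_order all_algebra.
From mathcomp Require Import all_classical all_reals all_analysis.
Import Order.TTheory GRing.Theory Num.Theory.
Import numFieldNormedType.Exports.

Set Implicit Arguments.
Unset Strict Implicit.
Unset Printing Implicit Defensive.

Local Open Scope classical_set_scope.
Local Open Scope ring_scope.

Section LipFree.
Variable R : realType.

Definition lip_bound (V : normedModType R) (f : V -> R) (L : R) : Prop :=
  forall x y : V, `|f x - f y| <= L * `|x - y|.

Definition Lip0 (V : normedModType R) : Type :=
  {f : V -> R | f 0 = 0 /\ exists L, lip_bound f L}.

(* dual (operator) norm of a functional on Lip_0(V), Lip_0(V) being normed by
   the Lipschitz constant:  inf { C >= 0 : |phi f| <= C * L whenever L is a
   Lipschitz bound of f }  (+oo if no such C). *)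
Definition dnorm (V : normedModType R) (phi : Lip0 V -> R) : \bar R :=
  ereal_inf (EFin @` [set C : R | 0 <= C /\
     forall (f : Lip0 V) (L : R), 0 <= L -> lip_bound (sval f) L ->
       `|phi f| <= C * L]).

Definition span_delta (V : normedModType R) : set (Lip0 V -> R) :=
  [set mu | exists (n : nat) (a : 'I_n -> R) (x : 'I_n -> V),
     mu = fun f => \sum_(i < n) a i * sval f (x i)].

(* F(V): the norm closure of span{delta(x)} in Lip_0(V)^* *)
Definition Free (V : normedModType R) : set (Lip0 V -> R) :=
  [set phi : Lip0 V -> R | forall e : R, 0 < e ->
     exists2 mu, @span_delta V mu & (dnorm (fun f => (phi f - mu f)%R) <= e%:E)%E].

Definition coarse_lip_embeds (X Y : normedModType R) : Prop :=
  exists (f : X -> Y) (A B C : R), 0 < A /\ 0 < B /\ 0 <= C /\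
    forall x y : X, A * `|x - y| - C <= `|f x - f y| <= B * `|x - y| + C.

Definition fspan (D : Type) (n : nat) (e : 'I_n -> D -> R) : set (D -> R) :=
  [set phi | exists c : 'I_n -> R, phi = fun f => \sum_(i < n) c i * e i f].

Definition iso_on (D1 D2 : Type) (E : set (D1 -> R)) (F : set (D2 -> R))
    (T : (D1 -> R) -> (D2 -> R)) : Prop :=
  [/\ forall (a : R) phi psi, E phi -> E psi ->
        T (fun f => a * phi f + psi f) = (fun g => a * T phi g + T psi g),
      forall phi psi, E phi -> E psi -> T phi = T psi -> phi = psi &
      T @` E = F].

Definition opnorm (D1 D2 : Type) (N1 : (D1 -> R) -> \bar R)
    (N2 : (D2 -> R) -> \bar R) (E : set (D1 -> R))
    (T : (D1 -> R) -> (D2 -> R)) : \bar R :=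
  ereal_inf (EFin @` [set C : R | 0 <= C /\
     forall phi, E phi -> (N2 (T phi) <= C%:E * N1 phi)%E]).

Definition opnorm_inv (D1 D2 : Type) (N1 : (D1 -> R) -> \bar R)
    (N2 : (D2 -> R) -> \bar R) (E : set (D1 -> R))
    (T : (D1 -> R) -> (D2 -> R)) : \bar R :=
  ereal_inf (EFin @` [set C : R | 0 <= C /\
     forall phi, E phi -> (N1 phi <= C%:E * N2 (T phi))%E]).

Definition bm_dist (D1 D2 : Type) (N1 : (D1 -> R) -> \bar R)
    (N2 : (D2 -> R) -> \bar R) (E : set (D1 -> R)) (F : set (D2 -> R)) : \bar R :=
  ereal_inf [set (opnorm N1 N2 E T * opnorm_inv N1 N2 E T)%E
            | T in [set T | iso_on E F T]].

Definition crudely_fin_rep (D1 D2 : Type)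
    (N1 : (D1 -> R) -> \bar R) (S1 : set (D1 -> R))
    (N2 : (D2 -> R) -> \bar R) (S2 : set (D2 -> R)) : Prop :=
  exists lam : R, 1 <= lam /\
    forall (n : nat) (e : 'I_n -> D1 -> R), (forall i, S1 (e i)) ->
    forall eps : R, 0 < eps ->
    exists (m : nat) (g : 'I_m -> D2 -> R), (forall j, S2 (g j)) /\
      (bm_dist N1 N2 (fspan e) (fspan g) <= (lam + eps)%:E)%E.

End LipFree.

(* Main.v *)
Require Import Defs.
From mathcomp Require Import all_boot all_order all_algebra.
From mathcomp Require Import all_classical all_reals all_analysis.
From mathcomp Require Import ring lra zify.
Import Order.TTheory GRing.Theory Num.Theory.
Import numFieldNormedType.Exports.
Set Implicit Arguments.
Unset Strict Implicit.
Unset Printing Implicit Defensive.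
Local Open Scope classical_set_scope.
Local Open Scope ring_scope.

Section Aux.
Variable R : realType.

Definition bnd (V : normedModType R) (phi : Lip0 V -> R) (C : R) : Prop :=
  forall (f : Lip0 V) (L : R), 0 <= L -> lip_bound (sval f) L -> `|phi f| <= C * L.

Lemma bnd_mono (V : normedModType R) (phi : Lip0 V -> R) C C' :
  C <= C' -> bnd phi C -> bnd phi C'.
Proof.
move=> hC h f L L0 hL; apply: le_trans (h f L L0 hL) _.
by rewrite ler_wpM2r.
Qed.

Lemma dnorm_le (V : normedModType R) (phi : Lip0 V -> R) C :
  0 <= C -> bnd phi C -> (dnorm phi <= C%:E)%E.
Proof. by move=> C0 h; apply: ereal_inf_lbound; exists C. Qed.

Lemma dnorm_ge0 (V : normedModType R) (phi : Lip0 V -> R) : (0 <= dnorm phi)%E.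
Proof. by apply/ereal_infP => _ [C [C0 _] <-]; rewrite lee_fin. Qed.

Lemma bnd_of_dnorm (V : normedModType R) (phi : Lip0 V -> R) C :
  (dnorm phi <= C%:E)%E -> bnd phi C.
Proof.
move=> h f L L0 hL; apply/ler_addgt0Pr => e e0.
have e'0 : 0 < e / (L + 1) by rewrite divr_gt0 // ltr_wpDl.
have : (dnorm phi < (C + e / (L + 1))%:E)%E.
  by apply: le_lt_trans h _; rewrite lte_fin ltrDl.
case/ereal_inf_lt => _ [C' [C'0 hC'] <-]; rewrite lte_fin => lt.
apply: le_trans (hC' f L L0 hL) _.
apply: le_trans (_ : (C + e / (L + 1)) * L <= _).
  by rewrite ler_wpM2r // ltW.
rewrite mulrDl lerD2l -mulrA ler_piMr // ?ltW //.
by rewrite mulrC ltr_pdivrMr ?mul1r ?ltrDl // ltr_wpDl.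
Qed.

Definition nrm (V : normedModType R) (phi : Lip0 V -> R) : R := fine (dnorm phi).

Lemma nrm_spec (V : normedModType R) (phi : Lip0 V -> R) C : bnd phi C ->
  [/\ dnorm phi = (nrm phi)%:E, 0 <= nrm phi, bnd phi (nrm phi) &
     forall C', 0 <= C' -> bnd phi C' -> nrm phi <= C'].
Proof.
move=> h.
have h' : bnd phi `|C| by apply: bnd_mono h; apply: ler_norm.
have le := dnorm_le (normr_ge0 C) h'.
have fin : dnorm phi \is a fin_num.
  by rewrite ge0_fin_numE ?dnorm_ge0 // (le_lt_trans le) // ltry.
have E : dnorm phi = (nrm phi)%:E by rewrite /nrm fineK.
split => //.
- by rewrite -lee_fin -E dnorm_ge0.
- by apply: bnd_of_dnorm; rewrite E.
- by move=> C' C'0 hC'; rewrite -lee_fin -E dnorm_le.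
Qed.

Lemma nrm_zero (V : normedModType R) (phi : Lip0 V -> R) C : bnd phi C ->
  nrm phi <= 0 -> forall f, phi f = 0.
Proof.
move=> h n0 f.
have [_ n_ge0 hb _] := nrm_spec h.
have : nrm phi = 0 by apply/eqP; rewrite eq_le n0 n_ge0.
move=> n00; rewrite n00 in hb.
case: (svalP f) => _ [L hL].
have hL' : lip_bound (sval f) `|L|.
  by move=> x y; apply: le_trans (hL x y) _; rewrite ler_wpM2r // ler_norm.
have := hb f `|L| (normr_ge0 _) hL'.
by rewrite mul0r normr_le0 => /eqP.
Qed.


Lemma bnd_lin (V : normedModType R) (phi psi : Lip0 V -> R) a C D :
  bnd phi C -> bnd psi D -> bnd (fun f => a * phi f + psi f) (`|a| * C + D).
Proof.
move=> h1 h2 f L L0 hL; apply: le_trans (ler_normD _ _) _.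
rewrite mulrDl -mulrA normrM; apply: lerD; last exact: h2.
by rewrite ler_wpM2l // h1.
Qed.

Lemma bnd_sum (V : normedModType R) n (c : 'I_n -> R) (G : 'I_n -> Lip0 V -> R)
   (D : 'I_n -> R) : (forall j, bnd (G j) (D j)) ->
  bnd (fun f => \sum_(j < n) c j * G j f) (\sum_(j < n) `|c j| * D j).
Proof.
move=> h f L L0 hL; rewrite mulr_suml.
apply: le_trans (ler_norm_sum _ _ _) _; apply: ler_sum => j _.
by rewrite normrM -mulrA ler_wpM2l // h.
Qed.

Lemma lip_abs (V : normedModType R) (f : Lip0 V) : exists L, 0 <= L /\ lip_bound (sval f) L.
Proof.
case: (svalP f) => _ [L hL]; exists `|L|; split => // x y.
by apply: le_trans (hL x y) _; rewrite ler_wpM2r // ler_norm.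
Qed.

Lemma sd_bnd (V : normedModType R) mu : span_delta mu -> exists C, @bnd V mu C.
Proof.
case=> n [a [x ->]]; exists (\sum_(i < n) `|a i| * `|x i|) => f L L0 hL.
rewrite mulr_suml; apply: le_trans (ler_norm_sum _ _ _) _; apply: ler_sum => i _.
rewrite normrM -mulrA ler_wpM2l //.
case: (svalP f) => f0 _.
by have := hL (x i) 0; rewrite f0 subr0 subr0 mulrC.
Qed.

Lemma sd_delta (V : normedModType R) (y : V) : span_delta (fun f : Lip0 V => sval f y).
Proof.
exists 1%N, (fun _ => 1), (fun _ => y); apply: funext => f.
by rewrite big_ord1 mul1r.
Qed.

Lemma sd0 (V : normedModType R) : span_delta (fun _ : Lip0 V => 0).
Proof. by exists 0%N, (fun _ => 0), (fun _ => 0); apply: funext => f; rewrite big_ord0. Qed.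

Lemma sd_lin (V : normedModType R) (a : R) (mu1 mu2 : Lip0 V -> R) :
  span_delta mu1 -> span_delta mu2 -> span_delta (fun f => a * mu1 f + mu2 f).
Proof.
case=> n1 [a1 [x1 ->]] [n2 [a2 [x2 ->]]].
exists (n1 + n2)%N,
  (fun k => match fintype.split k with inl i => a * a1 i | inr j => a2 j end),
  (fun k => match fintype.split k with inl i => x1 i | inr j => x2 j end).
apply: funext => f; rewrite big_split_ord /= mulr_sumr.
congr (_ + _); apply: eq_bigr => i _.
- by rewrite (unsplitK (inl i)) mulrA.
- by rewrite (unsplitK (inr i)).
Qed.

Lemma sd_sum (V : normedModType R) n (c : 'I_n -> R) (G : 'I_n -> Lip0 V -> R) :
  (forall j, span_delta (G j)) -> span_delta (fun f => \sum_(j < n) c j * G j f).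
Proof.
elim: n c G => [|n IH] c G h.
  by under eq_fun do rewrite big_ord0; apply: sd0.
under eq_fun do rewrite big_ord_recr /= addrC.
apply: sd_lin; first exact: h.
exact: (IH (fun j => c (widen_ord (leqnSn n) j)) (fun j => G (widen_ord (leqnSn n) j))).
Qed.

Lemma sd_free (V : normedModType R) mu : span_delta mu -> @Free R V mu.
Proof.
move=> h e e0; exists mu => //; apply: dnorm_le; first exact: ltW.
by move=> f L L0 hL; rewrite subrr normr0 mulr_ge0 // ltW.
Qed.

Lemma free_approx (V : normedModType R) phi : @Free R V phi -> forall eta, 0 < eta ->
  exists N (a : 'I_N -> R) (x : 'I_N -> V),
    bnd (fun f => phi f - \sum_(k < N) a k * sval f (x k)) eta.
Proof.
move=> h eta eta0; have [mu [N [a [x E]]] hd] := h eta eta0.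
exists N, a, x; apply: bnd_of_dnorm; by subst mu.
Qed.

Lemma free_bnd (V : normedModType R) phi : @Free R V phi -> exists C, bnd phi C.
Proof.
move=> h; have [mu hmu hd] := h 1 ltr01.
have [C hC] := sd_bnd hmu.
exists (`|1| * 1 + C).
have h2 := bnd_lin 1 (bnd_of_dnorm hd) hC.
move=> f L L0 hL; have := h2 f L L0 hL.
by rewrite mul1r subrK.
Qed.

End Aux.


Section McS.
Variable R : realType.

Lemma min_dist (a b c d e : R) : `|a - c| <= e -> `|b - d| <= e ->
  `|Num.min a b - Num.min c d| <= e.
Proof.
rewrite ler_distl => /andP[h1 h2]; rewrite ler_distl => /andP[h3 h4].
rewrite ler_distl.
case: (leP a b) => hab; case: (leP c d) => hcd; apply/andP; split; lra.
Qed.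

Lemma mybigmin_le (T : eqType) (b : R) (r : seq T) (F : T -> R) :
  \big[Num.min/b]_(j <- r) F j <= b /\
  forall i, i \in r -> \big[Num.min/b]_(j <- r) F j <= F i.
Proof.
elim: r => [|j r [IH1 IH2]]; first by rewrite big_nil; split.
rewrite big_cons; split.
  by rewrite ge_min IH1 orbT.
move=> i; rewrite inE => /orP[/eqP->|hi]; first by rewrite ge_min lexx.
by rewrite ge_min IH2 ?orbT.
Qed.

Variables (W : normedModType R) (I : finType).

Definition mcs (y0 : W) (v0 : R) (y : I -> W) (v : I -> R) (L : R) (w : W) : R :=
  \big[Num.min/(v0 + L * `|w - y0|)]_(i : I) (v i + L * `|w - y i|).

Lemma mcs_lip y0 v0 y v L : 0 <= L -> forall w z,
  `|mcs y0 v0 y v L w - mcs y0 v0 y v L z| <= L * `|w - z|.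
Proof.
move=> L0 w z; rewrite /mcs.
apply: (big_ind2 (fun a b => `|a - b| <= L * `|w - z|)).
- rewrite opprD addrACA subrr add0r -mulrBr normrM ger0_norm //.
  rewrite ler_wpM2l //; apply: le_trans (ler_dist_dist _ _) _.
  by rewrite opprB addrA subrK.
- by move=> *; apply: min_dist.
- move=> i _; rewrite opprD addrACA subrr add0r -mulrBr normrM ger0_norm //.
  rewrite ler_wpM2l //; apply: le_trans (ler_dist_dist _ _) _.
  by rewrite opprB addrA subrK.
Qed.

Lemma mcs_le y0 v0 y v L w i : mcs y0 v0 y v L w <= v i + L * `|w - y i|.
Proof.
have [_ h] := mybigmin_le (v0 + L * `|w - y0|) (index_enum I) (fun i => v i + L * `|w - y i|).
by apply: h; rewrite mem_index_enum.
Qed.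

Lemma mcs_le0 y0 v0 y v L w : mcs y0 v0 y v L w <= v0 + L * `|w - y0|.
Proof.
by have [h _] := mybigmin_le (v0 + L * `|w - y0|) (index_enum I) (fun i => v i + L * `|w - y i|).
Qed.

Lemma mcs_ge y0 v0 y v L w t : t <= v0 + L * `|w - y0| ->
  (forall i, t <= v i + L * `|w - y i|) -> t <= mcs y0 v0 y v L w.
Proof.
move=> h0 h; rewrite /mcs; apply: (big_ind (fun x => t <= x)) => //.
by move=> a b ha hb; rewrite le_min ha hb.
Qed.

Lemma mcs_at y0 v0 y v L :
  (forall i j, v i <= v j + L * `|y i - y j|) ->
  (forall i, v i <= v0 + L * `|y i - y0|) ->
  (forall i, v0 <= v i + L * `|y0 - y i|) ->
  mcs y0 v0 y v L y0 = v0 /\ forall i, mcs y0 v0 y v L (y i) = v i.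
Proof.
move=> h1 h2 h3; split.
  apply/eqP; rewrite eq_le; apply/andP; split.
    by have := mcs_le0 y0 v0 y v L y0; rewrite subrr normr0 mulr0 addr0.
  by apply: mcs_ge => //; rewrite subrr normr0 mulr0 addr0.
move=> i; apply/eqP; rewrite eq_le; apply/andP; split.
  by have := mcs_le y0 v0 y v L (y i) i; rewrite subrr normr0 mulr0 addr0.
by apply: mcs_ge.
Qed.

End McS.


Section LinAlg.
Variable R : realType.
Variables (D : Type) (n : nat) (e : 'I_n -> D -> R).

Definition Vm m (fs : 'I_m -> D) : 'M[R]_(n, m) := \matrix_(i < n, j < m) e i (fs j).

Definition InjT m (fs : 'I_m -> D) : Prop :=
  forall c : 'rV[R]_n, c *m Vm fs = 0 -> forall f, \sum_(i < n) c 0 i * e i f = 0.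

Lemma not_inj_step m (fs : 'I_m -> D) : ~ InjT fs ->
  exists fs' : 'I_m.+1 -> D, (\rank (Vm fs) < \rank (Vm fs'))%N.
Proof.
move=> hn.
have [c [hc [f hf]]] : exists c : 'rV[R]_n, c *m Vm fs = 0 /\
    exists f, \sum_(i < n) c 0 i * e i f != 0.
  apply: contrapT => h; apply: hn => c hc f; apply/eqP; apply: contrapT => hf.
  by apply: h; exists c; split => //; exists f; apply/negP.
pose fs' := fun j : 'I_m.+1 => if unlift ord_max j is Some j' then fs j' else f.
exists fs'.
have hsub : (kermx (Vm fs') <= kermx (Vm fs))%MS.
  apply/sub_kermxP; apply/matrixP => i j; rewrite !mxE.
  have := congr1 (fun M : 'M[R]_(n, m.+1) => M i (lift ord_max j)) (mulmx_ker (Vm fs')).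
  rewrite !mxE => h; apply: (etrans _ h); apply: eq_bigr => k _; rewrite !mxE /fs' liftK //.
have hc1 : (c <= kermx (Vm fs))%MS by apply/sub_kermxP.
have hc2 : ~~ (c <= kermx (Vm fs'))%MS.
  apply/negP => /sub_kermxP /(congr1 (fun M : 'M[R]_(1, m.+1) => M 0 ord_max)); rewrite !mxE.
  move=> h; move/negP: hf; apply; apply/eqP; apply: (etrans _ h).
  by apply: eq_bigr => k _; rewrite !mxE /fs' unlift_none.
have hlt : (kermx (Vm fs') < kermx (Vm fs))%MS.
  rewrite ltmxE hsub /=; apply/negP => h; move/negP: hc2; apply.
  exact: submx_trans hc1 h.
move: hlt; rewrite ltmxErank => /andP[_]; rewrite !mxrank_ker.
have := rank_leq_row (Vm fs'); have := rank_leq_row (Vm fs); lia.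
Qed.

Lemma exists_tests : exists m (fs : 'I_m -> D), InjT fs.
Proof.
suff: forall d m (fs : 'I_m -> D), (n - \rank (Vm fs) <= d)%N ->
    exists m (fs : 'I_m -> D), InjT fs.
  by move=> /(_ n 0%N (fun i : 'I_0 => ltac:(by case: i))) h; apply: h; lia.
elim=> [|d IH] m fs hd; (case: (pselect (InjT fs)) => hi; first by exists m, fs);
  have [fs' hr] := not_inj_step hi.
  by have := rank_leq_row (Vm fs'); lia.
by apply: (IH _ fs'); lia.
Qed.

Section Coord.
Variables (m : nat) (fs : 'I_m -> D).
Hypothesis hinj : InjT fs.

Definition coordT (phi : D -> R) : 'rV[R]_n :=
  (\row_(j < m) phi (fs j)) *m pinvmx (Vm fs).

Lemma coord_spec (c : 'I_n -> R) f :
  \sum_(i < n) coordT (fun f => \sum_(i < n) c i * e i f) 0 i * e i f =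
  \sum_(i < n) c i * e i f.
Proof.
pose c' : 'rV[R]_n := \row_i c i.
have hr : \row_(j < m) (\sum_(i < n) c i * e i (fs j)) = c' *m Vm fs.
  by apply/matrixP => i j; rewrite !mxE; apply: eq_bigr => k _; rewrite !mxE.
have h : coordT (fun f => \sum_(i < n) c i * e i f) *m Vm fs = c' *m Vm fs.
  by rewrite /coordT hr mulmxKpV // submxMl.
have := hinj (c := coordT (fun f => \sum_(i < n) c i * e i f) - c') _ f.
rewrite mulmxBl h subrr => /(_ erefl).
under eq_bigr do rewrite !mxE mulrBl.
rewrite sumrB => /eqP; rewrite subr_eq0 => /eqP H; apply: (etrans _ H).
by apply: eq_bigr => i _; rewrite /coordT !mxE.
Qed.

End Coord.
End LinAlg.


Section Main.
Variable R : realType.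
Variables (X Y : normedModType R) (f : X -> Y) (A B C : R).
Hypotheses (A0 : 0 < A) (B0 : 0 < B) (C0 : 0 <= C).
Hypothesis hf : forall x y, A * `|x - y| - C <= `|f x - f y| <= B * `|x - y| + C.
Variables (n : nat) (e : 'I_n -> Lip0 X -> R).
Hypothesis he : forall i, Free (e i).
Variables (m : nat) (fs : 'I_m -> Lip0 X).
Hypothesis hinj : InjT e fs.
Variables (Lf : 'I_m -> R).
Hypotheses (Lf0 : forall j, 0 <= Lf j) (hLf : forall j, lip_bound (sval (fs j)) (Lf j)).
Let P := pinvmx (Vm e fs).
Let Q := \sum_(i < n) \sum_(j < m) Lf j * `|P j i|.
Let eta := (2 * (Q + 1))^-1.
Variables (Ns : 'I_n -> nat) (cf : forall i, 'I_(Ns i) -> R) (xs : forall i, 'I_(Ns i) -> X).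
Hypothesis hap : forall i, bnd (fun h => e i h - \sum_(k < Ns i) @cf i k * sval h (@xs i k)) eta.
Variables (s dl : R).
Hypotheses (s0 : 0 < s) (dl0 : 0 < dl) (hs : C / s <= Num.min B (A / 2) * dl).
Let I := {i : 'I_n & 'I_(Ns i)}.
Let z (p : option I) : X := if p is Some q then @xs (tag q) (tagged q) else 0.
Hypothesis hdl : forall p q, z p <> z q -> dl <= `|z p - z q|.

Let F (x : X) : Y := s^-1 *: (f (s *: x) - f 0).

Lemma F0 : F 0 = 0.
Proof. by rewrite /F scaler0 subrr scaler0. Qed.

Lemma Fdist x y : `|F x - F y| = s^-1 * `|f (s *: x) - f (s *: y)|.
Proof.
rewrite /F -scalerBr opprB addrA subrK normrZ ger0_norm // invr_ge0 ltW //.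
Qed.

Lemma Fb p q : `|F (z p) - F (z q)| <= 2 * B * `|z p - z q| /\
               A / 2 * `|z p - z q| <= `|F (z p) - F (z q)|.
Proof.
case: (pselect (z p = z q)) => [->|hne].
  by rewrite !subrr !normr0 !mulr0.
have hd := hdl hne.
have hsd : `|s *: z p - s *: z q| = s * `|z p - z q|.
  by rewrite -scalerBr normrZ ger0_norm // ltW.
have := hf (s *: z p) (s *: z q); rewrite hsd => /andP[h1 h2].
rewrite Fdist.
have hmB : Num.min B (A / 2) <= B by rewrite ge_min lexx.
have hmA : Num.min B (A / 2) <= A / 2 by rewrite ge_min lexx orbT.
have hCs : C / s <= B * `|z p - z q|.
  apply: (le_trans hs); apply: ler_pM => //; first by rewrite le_min ltW // ltW // divr_gt0.
  exact: ltW.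
have hCs' : C / s <= A / 2 * `|z p - z q|.
  apply: (le_trans hs); apply: ler_pM => //; first by rewrite le_min ltW // ltW // divr_gt0.
  exact: ltW.
have sn : s != 0 by rewrite gt_eqF.
set d := `|z p - z q| in hCs hCs' *.
have e1 : s^-1 * (B * (s * d) + C) = B * d + C / s by field.
have e2 : s^-1 * (A * (s * d) - C) = A * d - C / s by field.
have Ad : A * d = A / 2 * d + A / 2 * d by rewrite -mulrDl -splitr.
split.
  apply: le_trans (_ : s^-1 * (B * (s * d) + C) <= _).
    by rewrite ler_wpM2l // invr_ge0 ltW.
  rewrite e1 -mulrA; lra.
apply: le_trans (_ : s^-1 * (A * (s * d) - C) <= _); last first.
  by rewrite ler_wpM2l // invr_ge0 ltW.
rewrite e2 Ad; lra.
Qed.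


Definition Wf j (v : X -> R) : R :=
  \sum_(i < n) P j i * \sum_(k < Ns i) @cf i k * v (@xs i k).
Definition Tm (phi : Lip0 X -> R) : Lip0 Y -> R :=
  fun g => \sum_(j < m) phi (fs j) * Wf j (fun x => sval g (F x)).
Definition Ph (phi : Lip0 X -> R) : Lip0 X -> R :=
  fun h => \sum_(j < m) phi (fs j) * Wf j (sval h).

Lemma bnd_ext (V : normedModType R) (phi psi : Lip0 V -> R) K :
  (forall h, phi h = psi h) -> bnd psi K -> bnd phi K.
Proof. by move=> E hb h L L0 hL; rewrite E; apply: hb. Qed.

Lemma approx (c : 'I_n -> R) K : 0 <= K ->
  bnd (fun h => \sum_(i < n) c i * e i h) K ->
  bnd (fun h => \sum_(i < n) c i * e i h - Ph (fun h => \sum_(i < n) c i * e i h) h) (K / 2).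
Proof.
move=> K0 hb.
set phi := fun h => \sum_(i < n) c i * e i h.
pose c' i := coordT e fs phi 0 i.
have hc' i : c' i = \sum_(j < m) phi (fs j) * P j i by rewrite /c' /coordT !mxE;
  apply: eq_bigr => j _; rewrite mxE.
pose mu i (h : Lip0 X) := \sum_(k < Ns i) @cf i k * sval h (@xs i k).
have E h : phi h - Ph phi h = \sum_(i < n) c' i * (e i h - mu i h).
  have Hs : \sum_(i < n) c' i * e i h = phi h := coord_spec hinj c h.
  rewrite -{1}Hs.
  under [X in _ = X]eq_bigr do rewrite mulrBr.
  rewrite sumrB; congr (_ - _).
  rewrite /Ph /Wf.
  under eq_bigr do rewrite mulr_sumr.
  rewrite exchange_big /=; apply: eq_bigr => i _.
  rewrite hc' mulr_suml; apply: eq_bigr => j _; by rewrite mulrA.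
apply: (bnd_ext E).
apply: (bnd_mono _ (bnd_sum c' hap)).
have hphi j : `|phi (fs j)| <= K * Lf j by apply: hb.
have hc'b i : `|c' i| <= K * \sum_(j < m) Lf j * `|P j i|.
  rewrite hc' mulr_sumr; apply: le_trans (ler_norm_sum _ _ _) _.
  apply: ler_sum => j _; rewrite normrM mulrA ler_wpM2r //.
have Q0 : 0 <= Q by apply: sumr_ge0 => i _; apply: sumr_ge0 => j _; rewrite mulr_ge0.
have eta0 : 0 <= eta by rewrite /eta invr_ge0 mulr_ge0 // addr_ge0.
apply: le_trans (_ : \sum_(i < n) K * (\sum_(j < m) Lf j * `|P j i|) * eta <= _).
  by apply: ler_sum => i _; rewrite ler_wpM2r.
rewrite -mulr_suml -mulr_sumr -/Q -mulrA ler_wpM2l //.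
rewrite /eta invfM mulrCA ler_piMr // ?invr_ge0 //.
rewrite ler_pdivrMr ?ltr_wpDl // mul1r lerDl //.
Qed.


Definition mkL (V : normedModType R) (h : V -> R) (h0 : h 0 = 0) (L : R)
  (hl : lip_bound h L) : Lip0 V := exist _ h (conj h0 (ex_intro _ L hl)).

Lemma lip0_0 (V : normedModType R) (g : Lip0 V) : sval g 0 = 0.
Proof. by case: (svalP g). Qed.

Lemma Wf_ext j (v1 v2 : X -> R) : (forall i k, v1 (@xs i k) = v2 (@xs i k)) ->
  Wf j v1 = Wf j v2.
Proof.
move=> h; apply: eq_bigr => i _; congr (_ * _); apply: eq_bigr => k _; by rewrite h.
Qed.

Let phiE (c : 'I_n -> R) := fun h : Lip0 X => \sum_(i < n) c i * e i h.

Lemma upper (c : 'I_n -> R) K : 0 <= K -> bnd (phiE c) K ->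
  bnd (Tm (phiE c)) (4 * B * K).
Proof.
move=> K0 hb g L L0 hL.
pose v (p : option I) := sval g (F (z p)).
have comp p q : v p <= v q + 2 * B * L * `|z p - z q|.
  have [h1 _] := Fb p q.
  rewrite -lerBlDl; apply: le_trans (ler_norm _) _.
  apply: le_trans (hL _ _) _.
  rewrite (_ : 2 * B * L * _ = L * (2 * B * `|z p - z q|)); last by ring.
  by rewrite ler_wpM2l.
have v0 : v None = 0 by rewrite /v /= F0 lip0_0.
have hBL : 0 <= 2 * B * L by rewrite mulr_ge0 // mulr_ge0 // ltW.
have c1 i : v i <= 0 + 2 * B * L * `|z i - 0| by have := comp i None; rewrite v0.
have c2 i : 0 <= v i + 2 * B * L * `|0 - z i| by have := comp None i; rewrite v0.
have [hat0 hat] := @mcs_at R X (option I) 0 0 z v (2 * B * L) comp c1 c2.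
pose hX := mkL hat0 (mcs_lip 0 0 z v hBL).
have E : Tm (phiE c) g = Ph (phiE c) hX.
  rewrite /Tm /Ph; apply: eq_bigr => j _; congr (_ * _); apply: Wf_ext => i k /=.
  by rewrite (hat (Some (Tagged (fun i => 'I_(Ns i)) k))).
rewrite E.
have hXb : lip_bound (sval hX) (2 * B * L) := mcs_lip 0 0 z v hBL.
have h1 := hb hX _ hBL hXb.
have h2 := approx K0 hb hBL hXb.
have : `|Ph (phiE c) hX| <= `|phiE c hX| + `|phiE c hX - Ph (phiE c) hX|.
  rewrite [X in `|X| <= _](_ : _ = phiE c hX - (phiE c hX - Ph (phiE c) hX)).
    exact: ler_normB.
  by rewrite opprB addrC subrK.
move: h1 h2; set a := `|phiE c hX|; set b := `|_ - _|; set w := `|Ph _ _|.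
move=> h1 h2 h3.
have -> : 4 * B * K * L = 2 * (K * (2 * B * L)) by ring.
have : K / 2 * (2 * B * L) <= K * (2 * B * L).
  by rewrite ler_wpM2r // ler_pdivrMr // ler_peMr // ler1n.
lra.
Qed.


Lemma lower (c : 'I_n -> R) K D : 0 <= K -> 0 <= D -> bnd (phiE c) K ->
  bnd (Tm (phiE c)) D -> bnd (phiE c) (2 * D / A + K / 2).
Proof.
move=> K0 D0 hb hT h L L0 hL.
pose v (p : option I) := sval h (z p).
pose y (p : option I) := F (z p).
pose Lc := 2 / A * L.
have Lc0 : 0 <= Lc by rewrite mulr_ge0 // divr_ge0 // ltW.
have comp p q : v p <= v q + Lc * `|y p - y q|.
  have [_ h2] := Fb p q.
  rewrite -lerBlDl; apply: le_trans (ler_norm _) _.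
  apply: le_trans (hL _ _) _.
  rewrite /Lc (_ : 2 / A * L * _ = L * (2 / A * `|y p - y q|)); last by ring.
  rewrite ler_wpM2l //.
  have -> : `|z p - z q| = 2 / A * (A / 2 * `|z p - z q|).
    by field; rewrite gt_eqF.
  by rewrite ler_wpM2l // divr_ge0 // ltW.
have v0 : v None = 0 by rewrite /v /= lip0_0.
have y0 : y None = 0 by rewrite /y /= F0.
have c1 i : v i <= 0 + Lc * `|y i - 0| by have := comp i None; rewrite v0 y0.
have c2 i : 0 <= v i + Lc * `|0 - y i| by have := comp None i; rewrite v0 y0.
have [hat0 hat] := @mcs_at R Y (option I) 0 0 y v Lc comp c1 c2.
pose gY := mkL hat0 (mcs_lip 0 0 y v Lc0).
have hgb : lip_bound (sval gY) Lc := mcs_lip 0 0 y v Lc0.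
have E : Tm (phiE c) gY = Ph (phiE c) h.
  rewrite /Tm /Ph; apply: eq_bigr => j _; congr (_ * _); apply: Wf_ext => i k /=.
  by rewrite (hat (Some (Tagged (fun i => 'I_(Ns i)) k))).
have h1 := hT gY _ Lc0 hgb; rewrite E in h1.
have h2 := approx K0 hb L0 hL.
have : `|phiE c h| <= `|Ph (phiE c) h| + `|phiE c h - Ph (phiE c) h|.
  rewrite [X in `|X| <= _](_ : _ = Ph (phiE c) h + (phiE c h - Ph (phiE c) h)).
    exact: ler_normD.
  by rewrite addrC subrK.
move: h1 h2; set a := `|Ph _ _|; set b := `|_ - _|; set w := `|phiE c h|.
have -> : D * Lc = 2 * D / A * L by rewrite /Lc; ring.
rewrite mulrDl; lra.
Qed.


Lemma Tm_lin a (phi psi : Lip0 X -> R) :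
  Tm (fun f => a * phi f + psi f) = fun g => a * Tm phi g + Tm psi g.
Proof.
apply: funext => g; rewrite /Tm mulr_sumr -big_split; apply: eq_bigr => j _.
by rewrite mulrDl mulrA.
Qed.

Lemma Tm_sub (phi psi : Lip0 X -> R) :
  Tm (fun f => phi f - psi f) = fun g => Tm phi g - Tm psi g.
Proof.
apply: funext => g; rewrite /Tm -sumrB; apply: eq_bigr => j _.
by rewrite mulrBl.
Qed.

Lemma Tm_sum (c : 'I_n -> R) :
  Tm (fun f => \sum_(i < n) c i * e i f) = fun g => \sum_(i < n) c i * Tm (e i) g.
Proof.
apply: funext => g; rewrite /Tm.
under eq_bigr do rewrite mulr_suml.
rewrite exchange_big /=; apply: eq_bigr => i _.
rewrite mulr_sumr; apply: eq_bigr => j _; by rewrite mulrA.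
Qed.

Lemma Tm_sd (phi : Lip0 X -> R) : span_delta (Tm phi).
Proof.
apply: (@sd_sum R Y m (fun j => phi (fs j)) (fun j g => Wf j (fun x => sval g (F x)))) => j.
apply: (@sd_sum R Y n (fun i => P j i)
   (fun i g => \sum_(k < Ns i) @cf i k * sval g (F (@xs i k)))) => i.
apply: (@sd_sum R Y (Ns i) (fun k => @cf i k) (fun k g => sval g (F (@xs i k)))) => k.
exact: sd_delta.
Qed.

Lemma sec_main : (forall i, Free (Tm (e i))) /\
  (bm_dist (@dnorm R X) (@dnorm R Y) (fspan e) (fspan (fun i => Tm (e i)))
     <= (4 * B * (4 / A))%:E)%E.
Proof.
split; first by move=> i; apply: sd_free; apply: Tm_sd.
pose Dn i := projT1 (cid (free_bnd (he i))).
have hD i : bnd (e i) (Dn i) := projT2 (cid (free_bnd (he i))).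
have hbE c := bnd_sum c hD.
have B4 : 0 <= 4 * B by rewrite mulr_ge0 // ltW.
have A4 : 0 <= 4 / A by rewrite divr_ge0 // ltW.
have iso : iso_on (fspan e) (fspan (fun i => Tm (e i))) Tm.
  split.
  - by move=> a phi psi _ _; apply: Tm_lin.
  - move=> _ _ [c ->] [d ->] hT.
    pose chi := phiE (fun i => c i - d i).
    have hchi h : chi h = phiE c h - phiE d h.
      by rewrite /chi /phiE -sumrB; apply: eq_bigr => i _; rewrite mulrBl.
    have hTc : bnd (Tm chi) 0.
      have -> : Tm chi = Tm (fun h => phiE c h - phiE d h).
        by congr Tm; apply: funext => h; apply: hchi.
      rewrite Tm_sub; move=> g L L0 _.
      by rewrite /phiE hT subrr normr0 mul0r.
    have [_ r0 hr hmin] := nrm_spec (hbE (fun i => c i - d i)).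
    have hl := lower r0 (lexx 0) hr hTc.
    have : nrm chi <= 2 * 0 / A + nrm chi / 2.
      by apply: hmin => //; rewrite mulr0 mul0r add0r divr_ge0.
    rewrite mulr0 mul0r add0r => hle.
    have hz : nrm chi <= 0 by lra.
    apply: funext => h; apply/eqP; rewrite -subr_eq0 -hchi; apply/eqP.
    exact: (nrm_zero hr hz).
  - apply/seteqP; split.
      move=> _ [_ [c ->] <-]; exists c; exact: Tm_sum.
    move=> _ [c ->]; exists (phiE c); first by exists c.
    exact: Tm_sum.
have on0 : (0 <= opnorm (@dnorm R X) (@dnorm R Y) (fspan e) Tm)%E.
  by apply/ereal_infP => _ [C' [C'0 _] <-]; rewrite lee_fin.
have oi0 : (0 <= opnorm_inv (@dnorm R X) (@dnorm R Y) (fspan e) Tm)%E.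
  by apply/ereal_infP => _ [C' [C'0 _] <-]; rewrite lee_fin.
have on1 : (opnorm (@dnorm R X) (@dnorm R Y) (fspan e) Tm <= (4 * B)%:E)%E.
  apply: ereal_inf_lbound; exists (4 * B) => //; split => // _ [c ->].
  have [E1 r0 hr _] := nrm_spec (hbE c).
  rewrite E1 -EFinM; apply: dnorm_le; first exact: mulr_ge0.
  exact: upper r0 hr.
have oi1 : (opnorm_inv (@dnorm R X) (@dnorm R Y) (fspan e) Tm <= (4 / A)%:E)%E.
  apply: ereal_inf_lbound; exists (4 / A) => //; split => // _ [c ->].
  have [E1 r0 hr hmin] := nrm_spec (hbE c).
  have hT := upper r0 hr.
  have [E2 D0 hD2 _] := nrm_spec hT.
  have hl := lower r0 D0 hr hD2.
  have := hmin _ _ hl; rewrite E1 E2 -EFinM lee_fin.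
  set D := nrm _; set r := nrm _ => h.
  have -> : 4 / A * D = 2 * (2 * D / A) by field; rewrite gt_eqF.
  have : 0 <= 2 * D / A by rewrite divr_ge0 ?mulr_ge0 // ltW.
  lra.
apply: (@le_trans _ _ (opnorm (@dnorm R X) (@dnorm R Y) (fspan e) Tm *
   opnorm_inv (@dnorm R X) (@dnorm R Y) (fspan e) Tm)%E).
  by apply: ereal_inf_lbound; exists Tm.
rewrite EFinM; exact: lee_pmul.
Qed.

End Main.



Lemma mindist (R : realType) (V : normedModType R) (J : finType) (z : J -> V) :
  exists2 dl : R, 0 < dl & forall p q, z p <> z q -> dl <= `|z p - z q|.
Proof.
pose F (pq : J * J) := if z pq.1 != z pq.2 then `|z pq.1 - z pq.2| else 1.
exists (\big[Num.min/1]_(pq : J * J) F pq).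
  apply: (big_ind (fun x => 0 < x)) => //.
    by move=> a b ha hb; rewrite lt_min ha hb.
  move=> [p q] _; rewrite /F /=; case: ifP => // /negbTE h.
  by rewrite normr_gt0 subr_eq0 h.
move=> p q hne.
have [_ h] := mybigmin_le 1 (index_enum (J * J)%type) F.
have := h (p, q) (mem_index_enum _); rewrite /F /=.
by case: eqP.
Qed.

Theorem corollary4p10 (R : realType) (X Y : completeNormedModType R) :
  coarse_lip_embeds X Y ->
  crudely_fin_rep (@dnorm R X) (@Free R X) (@dnorm R Y) (@Free R Y).
Proof.
move=> [f [A [B [C [A0 [B0 [C0 hf]]]]]]].
exists (4 * B * (4 / A) + 1); split.
  have : 0 <= 4 * B * (4 / A).
    by apply: mulr_ge0; [apply: mulr_ge0 => //; exact: ltW | apply: divr_ge0 => //; exact: ltW].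
  lra.
move=> n e he eps eps0.
have [m [fs hinj]] := exists_tests e.
pose Lf j := projT1 (cid (lip_abs (fs j))).
have hLf j : 0 <= Lf j /\ lip_bound (sval (fs j)) (Lf j) := projT2 (cid (lip_abs (fs j))).
pose P := pinvmx (Vm e fs).
pose Q := \sum_(i < n) \sum_(j < m) Lf j * `|P j i|.
pose eta := (2 * (Q + 1))^-1.
have Q0 : 0 <= Q by apply: sumr_ge0 => i _; apply: sumr_ge0 => j _;
  rewrite mulr_ge0 // (proj1 (hLf j)).
have eta0 : 0 < eta by rewrite /eta invr_gt0 mulr_gt0 // ltr_wpDl.
have H i : exists t : {N : nat & (('I_N -> R) * ('I_N -> X))%type},
    bnd (fun h => e i h - \sum_(k < projT1 t) (projT2 t).1 k * sval h ((projT2 t).2 k)) eta.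
  have [N [a [x hb]]] := free_approx (he i) eta0.
  by exists (existT _ N (a, x)).
pose t i := projT1 (cid (H i)).
have ht i := projT2 (cid (H i)).
pose Ns i := projT1 (t i).
pose cf i : 'I_(Ns i) -> R := (projT2 (t i)).1.
pose xs i : 'I_(Ns i) -> X := (projT2 (t i)).2.
pose z (p : option {i : 'I_n & 'I_(Ns i)}) : X :=
  if p is Some q then xs (tag q) (tagged q) else 0.
have [dl dl0 hdl] := mindist z.
pose mm := Num.min B (A / 2).
have mm0 : 0 < mm by rewrite lt_min B0 divr_gt0.
pose s := (C + 1) / (mm * dl).
have s0 : 0 < s by rewrite divr_gt0 ?mulr_gt0 // ltr_wpDl.
have hs : C / s <= mm * dl.
  have -> : C / s = C / (C + 1) * (mm * dl).
    rewrite /s; field; rewrite ?gt_eqF ?mulr_gt0 ?ltr_wpDl //.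
  rewrite ler_piMl ?mulr_ge0 ?ltW //.
  by rewrite ltr_pdivrMr ?ltr_wpDl // mul1r ltrDl.
have [hfree hbm] := @sec_main R X Y f A B C A0 B0 hf n e he m fs hinj Lf
  (fun j => proj1 (hLf j)) (fun j => proj2 (hLf j)) Ns cf xs ht s dl s0 dl0 hs hdl.
exists n, (fun i => Tm f e fs cf xs s (e i)); split => //.
apply: le_trans hbm _; rewrite lee_fin; lra.
Qed.
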